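(* Let $d\ge2$ and suppose $Q(z)=z^d+t$ ($t\in\mathbb{C}$) is post-critically finite. Let $\lambda\neq0$ be the multiplier of some periodic orbit of $Q$. Then $\lambda$ belongs to some number field $\mathbb{K}$, and for any non-Archimedean place $v$ of $\mathbb{K}$: $|\lambda|_v<1$ if the residual characteristic of $\mathbb{K}_v$ divides $d$, and $|\lambda|_v=1$ if the residual characteristic of $\mathbb{K}_v$ is prime to $d$.
   Context: A polynomial is post-critically finite if all its critical points have finite forward orbits. *)

(* Defs.v *)
From HB Require Import structures.
From mathcomp Require Import all_boot all_order all_algebra all_field.
From mathcomp Require Import complex.
From mathcomp Require Import reals.
Set Implicit Arguments. Unset Strict Implicit. Unset Printing Implicit Defensive.
Import Order.TTheory GRing.Theory Num.Theory.
Local Open Scope ring_scope.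

Notation Cplx R := (complex R).

Definition poly_iter (F : nzRingType) (P : {poly F}) (n : nat) : {poly F} :=
  iter n (fun q => P \Po q) 'X.

Definition finite_forward_orbit (F : nzRingType) (P : {poly F}) (c : F) : Prop :=
  exists s : seq F, forall n, iter n (horner P) c \in s.

Definition pcf (F : nzRingType) (P : {poly F}) : Prop :=
  forall c, root P^`() c -> finite_forward_orbit P c.

Definition is_periodic_multiplier (F : nzRingType) (P : {poly F}) (lam : F) : Prop :=
  exists (z0 : F) (n : nat),
    [/\ (0 < n)%N, iter n (horner P) z0 = z0,
        (forall m, (0 < m < n)%N -> iter m (horner P) z0 != z0) &
        lam = (poly_iter P n)^`().[z0]].

Definition nonarch_abs (K : fieldType) (R : realType) (v : K -> R) : Prop :=
  [/\ forall x, 0 <= v x,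
      forall x, v x = 0 <-> x = 0,
      forall x y, v (x * y) = v x * v y,
      forall x y, v (x + y) <= Num.max (v x) (v y) &
      exists x, x != 0 /\ v x != 1].

(* p is the residual characteristic of the completion K_v: p is a prime lying
   in the maximal ideal {x | v x < 1} of the valuation ring of v. *)
Definition residual_char (K : fieldType) (R : realType) (v : K -> R) (p : nat) : Prop :=
  prime p /\ v p%:R < 1.

(* Main.v *)
Require Import Defs.
From HB Require Import structures.
From mathcomp Require Import all_boot all_order all_algebra all_field.
From mathcomp Require Import complex.
From mathcomp Require Import reals.
From Stdlib Require Import Classical.
From mathcomp Require Import zify.
Import Order.TTheory GRing.Theory Num.Theory.
Local Open Scope ring_scope.

Module Helpers.
Set Implicit Arguments. Unset Strict Implicit. Unset Printing Implicit Defensive.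

Section Val.
Variables (K : fieldType) (R : realType) (v : K -> R).
Hypothesis hv : nonarch_abs v.

Lemma v_ge0 x : 0 <= v x. Proof. by case: hv. Qed.
Lemma v_eq0 x : v x = 0 <-> x = 0. Proof. by case: hv. Qed.
Lemma vM x y : v (x * y) = v x * v y. Proof. by case: hv. Qed.
Lemma vD x y : v (x + y) <= Num.max (v x) (v y). Proof. by case: hv. Qed.
Lemma v0 : v 0 = 0. Proof. by apply/v_eq0. Qed.
Lemma v1 : v 1 = 1.
Proof.
have h : v 1 * v 1 = v 1 by rewrite -vM mulr1.
have nz : v 1 != 0 by apply/eqP => /v_eq0/eqP; rewrite oner_eq0.
by apply: (mulfI nz); rewrite h mulr1.
Qed.
Lemma vX x n : v (x ^+ n) = v x ^+ n.
Proof. by elim: n => [|n IH]; rewrite ?expr0 ?v1 // !exprS vM IH. Qed.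
Lemma vNone : v (-1) = 1.
Proof.
have : v (-1) ^+ 2 = 1 by rewrite -vX sqrrN expr1n v1.
move/eqP; rewrite sqrf_eq1 => /orP[/eqP //|/eqP h].
by have := v_ge0 (-1); rewrite h ler0N1.
Qed.
Lemma vN x : v (- x) = v x.
Proof. by rewrite -mulN1r vM vNone mul1r. Qed.
Lemma vDle x y B : v x <= B -> v y <= B -> v (x + y) <= B.
Proof. move=> hx hy; apply: le_trans (vD x y) _; by rewrite ge_max hx hy. Qed.
Lemma vBle x y B : v x <= B -> v y <= B -> v (x - y) <= B.
Proof. by move=> hx hy; apply: vDle; rewrite // vN. Qed.
Lemma vDstrict x y : v y < v x -> v (x + y) = v x.
Proof.
move=> hlt; apply/eqP; rewrite eq_le; apply/andP; split.
  by apply: vDle => //; apply: ltW.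
have := vD (x + y) (- y); rewrite addrK vN le_max => /orP[//|h]; by rewrite leNgt hlt in h.
Qed.
Lemma vBstrict x y : v y < v x -> v (x - y) = v x.
Proof. by move=> h; rewrite vDstrict // vN. Qed.
Lemma v_nat n : v (n%:R) <= 1.
Proof.
elim: n => [|n IH]; first by rewrite v0 ler01.
by rewrite -addn1 natrD; apply: vDle; rewrite // v1.
Qed.
Lemma v_sum n (F : 'I_n -> K) B : 0 <= B -> (forall i, v (F i) <= B) ->
  v (\sum_(i < n) F i) <= B.
Proof.
move=> B0 hF; apply: (big_ind (fun x => v x <= B)); first by rewrite v0.
  by move=> x y; apply: vDle.
by move=> i _; apply: hF.
Qed.
Lemma v_prod n (F : 'I_n -> K) : v (\prod_(i < n) F i) = \prod_(i < n) v (F i).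
Proof. by rewrite (big_morph v vM v1). Qed.

End Val.

Lemma pigeon (T : eqType) (g : nat -> T) (s : seq T) :
  (forall i, g i \in s) -> exists i j, (i < j)%N /\ g i = g j.
Proof.
move=> hs.
have : ~~ uniq (map g (iota 0 (size s).+1)).
  apply/negP => U.
  have : (size (map g (iota 0 (size s).+1)) <= size s)%N.
    by apply: uniq_leq_size U _ => x /mapP[i _ ->]; exact: hs.
  by rewrite size_map size_iota ltnn.
case/(uniqPn (g 0)) => i [j [ij]]; rewrite size_map size_iota => jlt.
rewrite !(nth_map 0) ?size_iota ?(ltn_trans ij) // !nth_iota ?(ltn_trans ij) //.
by rewrite !add0n => e; exists i, j.
Qed.

Lemma iter_mul (T : Type) (f : T -> T) n z : iter n f z = z ->
  forall q, iter (q * n) f z = z.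
Proof. by move=> h; elim=> [|q IH] //; rewrite mulSn iterD IH h. Qed.

Lemma iter_mod (T : Type) (f : T -> T) n z : iter n f z = z ->
  forall k, iter k f z = iter (k %% n) f z.
Proof. by move=> h k; rewrite {1}(divn_eq k n) addnC iterD iter_mul. Qed.

Section Dyn.
Variables (K : fieldType) (R : realType) (v : K -> R).
Hypothesis hv : nonarch_abs v.
Variables (d : nat) (c : K).
Hypothesis d2 : (2 <= d)%N.
Let f := fun x : K => x ^+ d + c.

Definition fin (x : K) := exists s : seq K, forall k, iter k f x \in s.

Lemma finS x k : fin x -> fin (iter k f x).
Proof. by case=> s hs; exists s => j; rewrite -iterD. Qed.

Let vge0 := v_ge0 hv.

Lemma x_lt_xd (x : R) : 1 < x -> x < x ^+ d.
Proof.
move=> h; have x0 : 0 < x by apply: lt_trans h.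
rewrite -(prednK (ltnW d2)) exprS ltr_pMr // exprn_egt1 //.
by rewrite -lt0n -ltnS (prednK (ltnW d2)).
Qed.

Lemma xd_lt_x (x : R) : 0 < x -> x < 1 -> x ^+ d < x.
Proof.
move=> x0 h; rewrite -(prednK (ltnW d2)) exprS.
rewrite -[X in _ < X]mulr1 ltr_pM2l // exprn_ilt1 ?ltW //.
by rewrite -lt0n -ltnS (prednK (ltnW d2)).
Qed.

Lemma lemA_gen x : fin x -> v x <= Num.max 1 (v c).
Proof.
move=> [s hs]; rewrite leNgt; apply/negP => hM.
have H : forall k, Num.max 1 (v c) < v (iter k f x) /\
                   v (iter k f x) < v (iter k.+1 f x).
  elim=> [|k [IH1 IH2]] /=.
    have h1 : 1 < v x by apply: le_lt_trans hM; rewrite le_max lexx.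
    have hc : v c < v x ^+ d.
      by apply: lt_trans (x_lt_xd h1); apply: le_lt_trans hM; rewrite le_max lexx orbT.
    by rewrite /f vDstrict // vX //; split=> //; apply: x_lt_xd.
  split; first by apply: lt_trans IH2.
  set y := iter k.+1 f x.
  have hy : Num.max 1 (v c) < v y by apply: lt_trans IH2.
  have h1 : 1 < v y by apply: le_lt_trans hy; rewrite le_max lexx.
  have hc : v c < v y ^+ d.
    by apply: lt_trans (x_lt_xd h1); apply: le_lt_trans hy; rewrite le_max lexx orbT.
  change (v y < v (f y)); clearbody y; rewrite /f vDstrict // vX //; exact: x_lt_xd.
have mono : forall i j, (i < j)%N -> v (iter i f x) < v (iter j f x).
  move=> i; elim=> [//|j IH]; rewrite ltnS leq_eqVlt => /orP[/eqP->|/IH h].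
    exact: (H _).2.
  exact: lt_trans h (H j).2.
have [i [j [ij e]]] := pigeon hs.
by have := mono _ _ ij; rewrite e ltxx.
Qed.

Lemma f0 : f 0 = c.
Proof. by rewrite /f expr0n eqn0Ngt (ltnW d2) add0r. Qed.

Lemma vc_le1 : fin 0 -> v c <= 1.
Proof.
move=> h0; rewrite leNgt; apply/negP => hc.
have finc : fin (f c) by rewrite -f0; exact: (finS 2 h0).
have := lemA_gen finc; rewrite /f vDstrict ?vX // ?(x_lt_xd hc) //.
have -> : Num.max 1 (v c) = v c by apply/max_idPr; apply: ltW.
by rewrite leNgt x_lt_xd.
Qed.

Lemma integral x : fin 0 -> fin x -> v x <= 1.
Proof.
move=> h0 hx; have := lemA_gen hx.
by have -> : Num.max 1 (v c) = 1 by apply/max_idPl; apply: vc_le1.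
Qed.

Lemma fB a b : f a - f b = (a - b) * \sum_(i < d) a ^+ (d.-1 - i) * b ^+ i.
Proof. by rewrite /f -subrXX opprD addrACA subrr addr0. Qed.

Lemma nonexp a b : v a <= 1 -> v b <= 1 ->
  v (f a - f b) <= v (a - b) * Num.max (v a) (v b) ^+ d.-1.
Proof.
move=> ha hb; rewrite fB (vM hv) ler_wpM2l //.
apply: (v_sum hv); first by rewrite exprn_ge0 // le_max vge0.
move=> i; rewrite (vM hv) !(vX hv).
have hi : (i <= d.-1)%N by rewrite -ltnS (prednK (ltnW d2)).
rewrite -[X in _ <= _ ^+ X](subnK hi) exprD; apply: ler_pM; rewrite ?exprn_ge0 //.
  by apply: lerXn2r; rewrite ?nnegrE ?le_max ?vge0 // lexx.
by apply: lerXn2r; rewrite ?nnegrE ?le_max ?vge0 // lexx orbT.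
Qed.

Lemma N1 a b : v a <= 1 -> v b <= 1 -> v (f a - f b) <= v (a - b).
Proof.
move=> ha hb; apply: le_trans (nonexp ha hb) _.
rewrite -[X in _ <= X]mulr1 ler_wpM2l // exprn_ile1 // ?ge_max ?ha ?hb //.
by rewrite le_max vge0.
Qed.

Lemma N2 a b : v a < 1 -> v b < 1 -> a != b -> v (f a - f b) < v (a - b).
Proof.
move=> ha hb ab; apply: le_lt_trans (nonexp (ltW ha) (ltW hb)) _.
have pos : 0 < v (a - b).
  rewrite lt_def vge0 andbT; apply/eqP => /(v_eq0 hv)/eqP; rewrite subr_eq0.
  exact/negP.
rewrite -[X in _ < X]mulr1 ltr_pM2l // exprn_ilt1 // ?gt_max ?ha ?hb //.
  by rewrite -lt0n -ltnS (prednK (ltnW d2)).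
by rewrite le_max vge0.
Qed.

Lemma iterN1 a b : (forall k, v (iter k f a) <= 1) -> (forall k, v (iter k f b) <= 1) ->
  forall k, v (iter k f a - iter k f b) <= v (a - b).
Proof.
move=> ha hb; elim=> [//|k IH] /=; apply: le_trans IH; exact: N1.
Qed.


Lemma roots_lemma (w : K) : v (d%:R) = 1 -> w ^+ d = 1 -> w != 1 -> 1 <= v (w - 1).
Proof.
move=> vd wd w1; rewrite leNgt; apply/negP => hw.
have vw : v w = 1.
  by rewrite -[w](subrK 1) addrC vDstrict ?(v1 hv) // -(v1 hv).
set S := \sum_(i < d) w ^+ (d.-1 - i) * 1 ^+ i.
have S0 : S = 0.
  have : (w - 1) * S = 0 by rewrite -subrXX wd expr1n subrr.
  by move/eqP; rewrite mulf_eq0 subr_eq0 (negPf w1) /= => /eqP.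
have hT : v (\sum_(i < d) (w ^+ (d.-1 - i) - 1)) <= v (w - 1).
  apply: (v_sum hv) => // i.
  have := subrXX w 1 (d.-1 - i); rewrite expr1n => ->.
  rewrite (vM hv) -[X in _ <= X]mulr1 ler_wpM2l //.
  apply: (v_sum hv) => // j; by rewrite expr1n mulr1 (vX hv) vw expr1n.
have : d%:R = - \sum_(i < d) (w ^+ (d.-1 - i) - 1).
  rewrite sumrB sumr_const card_ord -/S.
  by rewrite (eq_bigr (fun i : 'I_d => w ^+ (d.-1 - i) * 1 ^+ i)) -/S ?S0 ?sub0r ?opprK // => i _; rewrite expr1n mulr1.
move=> e; have := le_lt_trans hT hw; rewrite -(vN hv) -e vd ltxx //.
Qed.

Lemma vd_coprime p : prime p -> v p%:R < 1 -> coprime p d -> v (d%:R) = 1.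
Proof.
move=> pp vp cp; apply/eqP; rewrite eq_le v_nat //=; rewrite leNgt; apply/negP => hd.
have d0 : (0 < d)%N by apply: ltnW.
case: (egcdnP p d0) => km kn e _.
move: cp; rewrite coprime_sym /coprime => /eqP g.
rewrite g in e.
have e' : 1 = km%:R * d%:R - kn%:R * p%:R :> K.
  by rewrite -!natrM e natrD addrAC subrr add0r.
have : v 1 < 1.
  rewrite e'; apply: le_lt_trans (vD hv _ _) _; rewrite gt_max (vN hv) !(vM hv).
  apply/andP; split.
    by apply: le_lt_trans hd; apply: ler_piMl => //; apply: v_nat.
  by apply: le_lt_trans vp; apply: ler_piMl => //; apply: v_nat.
by rewrite (v1 hv) ltxx.
Qed.

Lemma vd_dvd p : v p%:R < 1 -> (p %| d)%N -> v (d%:R) < 1.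
Proof.
move=> vp /dvdnP[q ->]; rewrite natrM (vM hv); apply: le_lt_trans vp.
by apply: ler_piMl => //; apply: v_nat.
Qed.


Lemma argmin_nat (g : nat -> R) n : (0 < n)%N ->
  exists k0, (k0 < n)%N /\ forall j, (j < n)%N -> g k0 <= g j.
Proof.
elim: n => [//|n IH] _; case: n IH => [|n] IH.
  by exists 0%N; split=> // j; rewrite ltnS leqn0 => /eqP->.
have [k0 [k0n hk0]] := IH isT.
case: (leP (g k0) (g n.+1)) => h.
  exists k0; split; first by apply: ltnW.
  move=> j; rewrite ltnS leq_eqVlt => /orP[/eqP->//|]; exact: hk0.
exists n.+1; split=> // j; rewrite ltnS leq_eqVlt => /orP[/eqP->//|/hk0].
by apply: le_trans; apply: ltW.
Qed.

Lemma prod01 n (F : 'I_n -> R) : (forall i, 0 <= F i <= 1) -> 0 <= \prod_(i < n) F i <= 1.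
Proof.
move=> hF; elim: n F hF => [|n IH] F hF; first by rewrite big_ord0 ler01 lexx.
rewrite big_ord_recl; have /andP[a0 a1] := hF ord0.
have /andP[b0 b1] := IH _ (fun i => hF (lift ord0 i)).
by rewrite mulr_ge0 ?mulr_ile1.
Qed.

Let iterSr' n x : (0 < n)%N -> iter n f x = iter n.-1 f (f x).
Proof. by move=> n0; rewrite -iterSr prednK. Qed.

Theorem dyn_main (Z : K) (n p : nat) : (0 < n)%N -> fin 0 -> iter n f Z = Z ->
  \prod_(k < n) (d%:R * iter k f Z ^+ d.-1) != 0 ->
  prime p -> v p%:R < 1 ->
  ((p %| d)%N -> v (\prod_(k < n) (d%:R * iter k f Z ^+ d.-1)) < 1) /\
  (coprime p d -> v (\prod_(k < n) (d%:R * iter k f Z ^+ d.-1)) = 1).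
Proof.
move=> n0 h0 per mu0 pp vp.
have finZ : fin Z.
  exists [seq iter k f Z | k <- iota 0 n] => k; rewrite (iter_mod per).
  by apply: map_f; rewrite mem_iota add0n ltn_pmod.
have intZ k : v (iter k f Z) <= 1 by apply: integral h0 (finS k finZ).
have int0 k : v (iter k f 0) <= 1 by apply: integral h0 (finS k h0).
rewrite (v_prod hv).
under eq_bigr => k _ do rewrite (vM hv) (vX hv).
split.
  move=> pd; have vd := vd_dvd vp pd.
  case: n n0 {mu0 per finZ} => [//|n] _.
  rewrite big_ord_recl.
  apply: (@le_lt_trans _ _ (v d%:R * 1)); last by rewrite mulr1.
  apply: ler_pM; rewrite ?mulr_ge0 ?exprn_ge0 //.
    by apply: prodr_ge0 => i _; rewrite mulr_ge0 ?exprn_ge0.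
    by apply: ler_piMr; rewrite ?exprn_ge0 ?exprn_ile1.
  suff /andP[_ ->] : (0 <= \prod_(i < n) (v d%:R * v (iter (lift ord0 i) f Z) ^+ d.-1) <= 1) by [].
  apply: prod01 => i; apply/andP; split.
    by apply: mulr_ge0; rewrite ?exprn_ge0.
  by apply: mulr_ile1; rewrite ?exprn_ge0 ?exprn_ile1 ?v_nat.
move=> cp; have vd := vd_coprime pp vp cp.
suff allz : forall k, (k < n)%N -> v (iter k f Z) = 1.
  by rewrite big1 // => k _; rewrite vd allz // expr1n mulr1.
move=> k kn; apply/eqP; rewrite eq_le intZ /= leNgt; apply/negP => hk.
have [k0 [k0n hk0]] := argmin_nat (fun k => v (iter k f Z)) n0.
set u := iter k0 f Z.
have hu1 : v u < 1 by apply: le_lt_trans (hk0 _ kn) hk.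
have itu m : iter m f u = iter (m + k0) f Z by rewrite iterD.
have hmin m : v u <= v (iter m f u).
  by rewrite itu (iter_mod per); apply: hk0; rewrite ltn_pmod.
have u0 : u != 0.
  move/prodf_neq0: mu0 => /(_ (Ordinal k0n) isT) /=; apply: contra => /eqP u0.
  by rewrite -/u u0 expr0n -subn1 subn_eq0 leqNgt d2 mulr0.
have vu0 : 0 < v u.
  by rewrite lt_def vge0 andbT; apply/eqP => /(v_eq0 hv) /eqP; apply/negP.
have intu m : v (iter m f u) <= 1 by rewrite itu.
have fixu : iter n f u = u by rewrite /u -iterD addnC iterD per.
have E : exists N, iter N f 0 = iter N f u.
  apply: NNPP => hne.
  have neq N : iter N f 0 != iter N f u by apply/eqP => e; apply: hne; exists N.
  pose A i := iter (i * n) f 0.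
  have Astep i : A i.+1 = iter n f (A i) by rewrite /A mulSn iterD.
  have Aneq i : A i != u.
    by have := neq (i * n)%N; rewrite (iter_mul fixu).
  pose e i := v (A i - u).
  have intA i m : v (iter m f (A i)) <= 1 by rewrite /A -iterD; apply: int0.
  have dec i : e i.+1 <= e i.
    rewrite /e Astep; rewrite -[X in v (_ - X) <= _]fixu; exact: (iterN1 (intA i) intu n).
  have le_u i : e i <= v u.
    elim: i => [|i IH]; first by rewrite /e /A mul0n /= sub0r (vN hv).
    exact: le_trans (dec i) IH.
  have Ain i : v (A i) < 1.
    apply: le_lt_trans hu1; rewrite -(subrK u (A i)); apply: (vDle hv); [exact: le_u | exact: lexx].
  have sdec i : e i.+1 < e i.
    rewrite /e Astep; rewrite -[X in v (_ - X) < _]fixu !(iterSr' _ n0).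
    apply: le_lt_trans (N2 (Ain i) hu1 (Aneq i)).
    apply: iterN1 => m; rewrite -iterSr; [exact: intA | exact: intu].
  have mono i j : (i < j)%N -> e j < e i.
    elim: j => [//|j IH]; rewrite ltnS leq_eqVlt => /orP[/eqP->|/IH h].
      exact: sdec.
    exact: lt_trans (sdec j) h.
  case: h0 => s0 hs0.
  have [i [j [ij eA]]] := pigeon (g := A) (s := s0) (fun i => hs0 _).
  by have := mono _ _ ij; rewrite /e eA ltxx.
have EP : exists N, iter N f 0 == iter N f u by case: E => N eN; exists N; apply/eqP.
case: (ex_minnP EP) => N /eqP eN minN.
case: N eN minN => [/= eN _|K'] ; first by move: u0; rewrite -eN eqxx.
move=> eN minN.
set b := iter K' f 0; set c' := iter K' f u.
have bc : b != c'.
  apply/eqP => e; have := minN K'; rewrite -/b -/c' e eqxx ltnn => /(_ isT) //.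
have bd : b ^+ d = c' ^+ d.
  by have : f b = f c' by []; rewrite /f => /addIr.
case: K' @b @c' eN minN bc bd => [|K''] b c' eN minN bc bd.
  move: bd; rewrite /b /c' /= expr0n eqn0Ngt (ltnW d2) /= => /esym /eqP.
  by rewrite expf_eq0 (negPf u0) andbF.
have hvbc : v (b - c') < v u.
  apply: (@le_lt_trans _ _ (v (f 0 - f u))).
    rewrite /b /c' !iterSr; apply: iterN1 => m; rewrite -iterSr //.
  have -> : f 0 - f u = - u ^+ d by rewrite f0 /f opprD addrCA subrr addr0.
  by rewrite (vN hv) (vX hv) xd_lt_x.
have vc' : v u <= v c' by apply: hmin.
have c'0 : c' != 0.
  by apply/eqP => e; move: vc'; rewrite e (v0 hv) leNgt vu0.
set w := b / c'.
have wd : w ^+ d = 1 by rewrite /w expr_div_n bd divff // expf_neq0.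
have w1 : w != 1.
  apply: contra bc => /eqP hw; apply/eqP.
  by rewrite -(divfK c'0 b) -/w hw mul1r.
have := roots_lemma vd wd w1 => hw.
have ebc : b - c' = c' * (w - 1) by rewrite mulrBr mulr1 /w mulrC divfK.
have : v c' <= v (b - c').
  by rewrite ebc (vM hv) -[X in X <= _]mulr1 ler_wpM2l.
move=> h; have := lt_le_trans hvbc (le_trans vc' h); by rewrite ltxx.
Qed.

End Dyn.

Lemma horner_poly_iter (F : comNzRingType) (P : {poly F}) n x :
  (poly_iter P n).[x] = iter n (horner P) x.
Proof. by elim: n => [|n IH] /=; rewrite ?hornerX // horner_comp IH. Qed.

Lemma map_poly_iter (F G : nzRingType) (f : {rmorphism F -> G}) (P : {poly F}) n :
  map_poly f (poly_iter P n) = poly_iter (map_poly f P) n.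
Proof. by elim: n => [|n IH] /=; rewrite ?map_polyX // map_comp_poly IH. Qed.

Lemma deriv_poly_iter (F : comNzRingType) (P : {poly F}) n x :
  (poly_iter P n)^`().[x] = \prod_(k < n) P^`().[iter k (horner P) x].
Proof.
elim: n => [|n IH] /=; first by rewrite derivX hornerC big_ord0.
rewrite deriv_comp hornerM horner_comp IH big_ord_recr /= mulrC.
by rewrite horner_poly_iter.
Qed.

Lemma step_monic (F : idomainType) (d k : nat) (q r : {poly F}) : (2 <= d)%N ->
  q \is monic -> size q = (d ^ k).+1 -> (size r <= 2)%N ->
  (q ^+ d + r \is monic) /\ size (q ^+ d + r) = (d ^ k.+1).+1.
Proof.
move=> d2 mq sq sr.
have mqd : q ^+ d \is monic by apply: monic_exp.
have sqd : size (q ^+ d) = (d ^ k.+1).+1.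
  have := size_exp q d; rewrite sq /= expnS mulnC => <-.
  by rewrite prednK // size_poly_gt0 monic_neq0.
have lt : (size r < size (q ^+ d))%N.
  rewrite sqd ltnS; apply: leq_trans sr _.
  by apply: leq_trans (leq_pexp2l (ltnW d2) (ltn0Sn k)); rewrite expn1.
split; last by rewrite size_polyDl.
by rewrite monicE lead_coefDl // -monicE.
Qed.

Lemma poly_iter_monic (F : idomainType) (d : nat) (c : F) n : (2 <= d)%N ->
  (poly_iter ('X^d + c%:P) n \is monic) /\ size (poly_iter ('X^d + c%:P) n) = (d ^ n).+1.
Proof.
move=> d2; elim: n => [|n [IH1 IH2]] /=; first by rewrite monicX size_polyX expn0.
rewrite comp_polyD comp_Xn_poly comp_polyC; apply: step_monic => //.
by apply: leq_trans (size_polyC_leq1 _) _.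
Qed.

Lemma exists_irr (F L : fieldType) (iota : {rmorphism F -> L}) z (q : {poly F}) :
  q != 0 -> root (map_poly iota q) z ->
  exists p, irreducible_poly p /\ root (map_poly iota p) z.
Proof.
move: {2}(size q) (leqnn (size q)) => N; elim: N q => [|N IH] q sq nq rq.
  by move: nq; rewrite -size_poly_eq0; move: sq; rewrite leqn0 => /eqP->.
case: (classic (exists q', [/\ q' != 0, root (map_poly iota q') z & (size q' < size q)%N])).
  case=> q' [nq' rq' lt]; apply: (IH q') => //.
  by rewrite -ltnS; apply: leq_trans lt sq.
move=> hmin; exists q; split=> //.
apply/(subfx_irreducibleP rq nq) => q' rq' nq'; rewrite leqNgt; apply/negP => lt.
by apply: hmin; exists q'.
Qed.

Lemma fin_of_eq (T : eqType) (g : T -> T) x i j : (i < j)%N ->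
  iter i g x = iter j g x -> forall m, iter m g x \in [seq iter k g x | k <- iota 0 j].
Proof.
move=> ij e m; elim: m {-2}m (leqnn m) => [|M IH] m hm.
  by move: hm; rewrite leqn0 => /eqP->; apply: map_f; rewrite mem_iota (leq_ltn_trans _ ij).
case: (ltnP m j) => hj; first by apply: map_f; rewrite mem_iota.
have -> : iter m g x = iter (m - j + i) g x.
  by rewrite -{1}(subnK hj) iterD -e -iterD.
by apply: IH; lia.
Qed.

End Helpers.
Import Helpers.

Theorem proposition5p4 (R : realType) (d : nat) (t lam : Cplx R) :
  (2 <= d)%N ->
  pcf ('X^d + t%:P) ->
  is_periodic_multiplier ('X^d + t%:P) lam ->
  lam != 0 ->
  exists (K : fieldExtType rat) (iota : {rmorphism K -> Cplx R}) (mu : K),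
    iota mu = lam /\
    forall (v : K -> R), nonarch_abs v ->
      forall p : nat, residual_char v p ->
        ((p %| d)%N -> v mu < 1) /\ (coprime p d -> v mu = 1).
Proof.
move=> d2 hpcf [z0 [n [n0 per _ lamE]]] lam0.
set P := 'X^d + t%:P.
have d0 : (0 < d)%N by apply: ltnW.
have fE y : P.[y] = y ^+ d + t by rewrite /P hornerD hornerXn hornerC.
have dP : P^`() = 'X^(d.-1) *+ d by rewrite /P derivD derivXn derivC addr0.
have dPE y : P^`().[y] = d%:R * y ^+ d.-1 by rewrite dP hornerMn hornerXn mulr_natl.
have r0 : root P^`() 0.
  by rewrite /root dPE expr0n -subn1 subn_eq0 leqNgt d2 mulr0.
have [s0 hs0] := hpcf 0 r0.
have [i [j [ij eij]]] := pigeon (g := fun k => iter k (horner P) 0) hs0.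
(* t is algebraic *)
pose Fk k := iter k (fun q : {poly rat} => q ^+ d + 'X) 0.
have FkE k : (map_poly ratr (Fk k)).[t] = iter k (horner P) 0.
  elim: k => [|k IH]; first by rewrite /Fk /= rmorph0 horner0.
  by rewrite /Fk /= -/(Fk k) rmorphD rmorphXn /= map_polyX hornerD horner_exp hornerX IH fE.
have Fk_ms k : (Fk k.+1 \is monic) /\ size (Fk k.+1) = (d ^ k).+1.
  elim: k => [|k [IH1 IH2]].
    by rewrite /Fk /= expr0n eqn0Ngt d0 add0r monicX size_polyX expn0.
  by rewrite /Fk iterS -/(Fk k.+1); apply: step_monic => //; rewrite size_polyX.
have nz1 : Fk j - Fk i != 0.
  case: j ij eij => [//|j'] ij _.
  have [m1 s1] := Fk_ms j'.
  have lt : (size (Fk i) < size (Fk j'.+1))%N.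
    case: i ij => [|i'] ij; first by rewrite /Fk /= size_poly0 s1.
    have [_ s2] := Fk_ms i'; rewrite s1 s2 ltnS ltn_exp2l //.
  by rewrite -size_poly_eq0 size_polyDl ?size_polyN // s1.
have rq1 : root (map_poly ratr (Fk j - Fk i)) t.
  by rewrite /root rmorphB /= hornerD hornerN !FkE eij subrr.
have [p1 [irr1 rt1]] := exists_irr nz1 rq1.
have nzp1 : p1 != 0 by apply: irredp_neq0.
pose K1 := SubFieldExtType rt1 irr1.
pose iota1 : {rmorphism K1 -> Cplx R} := subfx_inj.
pose T1 : K1 := subfx_root ratr t p1.
have iT1 : iota1 T1 = t by apply: subfx_inj_root.
pose P1 : {poly K1} := 'X^d + T1%:P.
have mP1 : map_poly iota1 P1 = P by rewrite /P1 rmorphD /= map_polyXn map_polyC /= iT1.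
pose G := poly_iter P1 n - 'X.
have nzG : G != 0.
  have [_ sI] := poly_iter_monic T1 n d2.
  rewrite /G -size_poly_eq0 size_polyDl ?size_polyN ?sI // size_polyX ltnS.
  by apply: leq_trans (leq_pexp2l (ltnW d2) n0); rewrite expn1.
have rG : root (map_poly iota1 G) z0.
  by rewrite /root /G rmorphB /= map_polyX map_poly_iter mP1 hornerD hornerN hornerX horner_poly_iter per subrr.
have [p2 [irr2 rz2]] := exists_irr nzG rG.
have nzp2 : p2 != 0 by apply: irredp_neq0.
pose K2 := SubFieldExtType rz2 irr2.
pose Kf := baseFieldType K2.
pose iota2 : {rmorphism Kf -> Cplx R} := subfx_inj.
pose T : Kf := in_alg K2 T1.
have iT : iota2 T = t by rewrite -iT1; apply: (subfx_inj_base rz2 nzp2).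
pose Z : Kf := subfx_root iota1 z0 p2.
have iZ : iota2 Z = z0 by apply: (subfx_inj_root rz2 nzp2).
pose f := fun x : Kf => x ^+ d + T.
have iota_iter k x : iota2 (iter k f x) = iter k (horner P) (iota2 x).
  by elim: k => [|k IH] //=; rewrite fE -IH /f rmorphD rmorphXn iT.
pose mu := \prod_(k < n) (d%:R * iter k f Z ^+ d.-1).
have imu : iota2 mu = lam.
  rewrite lamE deriv_poly_iter rmorph_prod; apply: eq_bigr => k _.
  by rewrite rmorphM rmorphXn rmorph_nat iota_iter iZ dPE.
exists Kf, iota2, mu; split=> // v hv p [pp vp].
have fin0 : fin d T 0.
  exists [seq iter k f 0 | k <- iota 0 j].
  apply: fin_of_eq ij _; apply: (fmorph_inj iota2).
  by rewrite !iota_iter rmorph0.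
have perK : iter n f Z = Z by apply: (fmorph_inj iota2); rewrite iota_iter iZ.
have mu0 : mu != 0 by apply: contraNneq lam0 => h; rewrite -imu h rmorph0.
exact: (dyn_main hv d2 n0 fin0 perK mu0 pp vp).
Qed.
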